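(* Let $G$ be a graph on $V$ and $W\subseteq V$ nonempty. Then $W$ is minimally reducible in $G$ if and only if $W$ is the domain of a combinatorial reduction rule applicable to $G$, i.e. either $W=\{v\}$ where $v$ has a loop, or $W=\{v_1,v_2\}$ where $v_1,v_2$ are adjacent loopless vertices, or $W=\{v\}$ where $v$ is loopless and has no neighbors. Consequently the minimal graph reductions of $G$ are exactly the applicable rules $\mathrm{gpr}_v$, $\mathrm{gdr}_{v_1,v_2}$, $\mathrm{gnr}_v$.
   Context: A graph means a finite simple graph in which loops are allowed, with adjacency matrix $A$ over $\mathbf F_2$ ($A_{vv}=1$ iff $v$ has a loop). Let $\mathcal V$ be the $\mathbf F_2$-vector space with basis $V$ and $\mathcal E(x,y)=x^TAy$. For $W\subseteq V$, $\langle W\rangle$ is the span and $\langle W\rangle^{\perp\mathcal E}=\{x:\mathcal E(x,w)=0\ \forall w\in\langle W\rangle\}$. $W$ is reducible in $G$ if $\langle W\rangle+\langle W\rangle^{\perp\mathcal E}=\mathcal V$. A nonempty $W$ is minimally reducible if it is reducible and no nonempty proper subset of it is reducible. The combinatorial reduction rules (with domain ordered first, $R$ the principal submatrix on the other vertices): $\mathrm{gpr}_v$ applies iff $v$ has a loop, $\begin{pmatrix}1&Q\\Q^T&R\end{pmatrix}\mapsto R-Q^TQ$; $\mathrm{gdr}_{v_1,v_2}$ applies iff $v_1,v_2$ are loopless and adjacent, $\begin{pmatrix}J&Q\\Q^T&R\end{pmatrix}\mapsto R-Q^TJQ$, $J=\begin{pmatrix}0&1\\1&0\end{pmatrix}$;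 $\mathrm{gnr}_v$ applies iff $v$ is loopless with no neighbors, $\begin{pmatrix}0&\mathbf 0\\ \mathbf 0^T&R\end{pmatrix}\mapsto R$. *)

(* Defs.v *)
From HB Require Import structures.
From mathcomp Require Import all_boot all_order all_algebra.
Set Implicit Arguments. Unset Strict Implicit. Unset Printing Implicit Defensive.
Import GRing.Theory.
Local Open Scope ring_scope.

(* A graph (loops allowed) on V = 'I_n is a symmetric adjacency matrix
   A over F_2; A v v = 1 iff v has a loop.  Vectors of the F_2-space with
   basis V are row vectors 'rV['F_2]_n; the basis vector v is delta_mx 0 v. *)

Definition bform n (A : 'M['F_2]_n) (x y : 'rV['F_2]_n) : 'F_2 :=
  (x *m A *m y^T) 0 0.

Definition spanmx n (W : {set 'I_n}) : 'M['F_2]_n :=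
  (\sum_(i in W) <<delta_mx 0 i : 'rV['F_2]_n>>)%MS.

Definition in_orth n (A : 'M['F_2]_n) (W : {set 'I_n}) (x : 'rV['F_2]_n) : Prop :=
  forall w : 'rV['F_2]_n, (w <= spanmx W)%MS -> bform A x w = 0.

Definition reducible n (A : 'M['F_2]_n) (W : {set 'I_n}) : Prop :=
  forall x : 'rV['F_2]_n, exists y z : 'rV['F_2]_n,
    (y <= spanmx W)%MS /\ in_orth A W z /\ x = y + z.

Definition minimally_reducible n (A : 'M['F_2]_n) (W : {set 'I_n}) : Prop :=
  W != set0 /\ reducible A W /\
  (forall U : {set 'I_n}, U != set0 -> U \proper W -> ~ reducible A U).

(* Main.v *)
Require Import Defs.
From HB Require Import structures.
From mathcomp Require Import all_boot all_order all_algebra.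
Local Open Scope ring_scope.
Set Implicit Arguments. Unset Strict Implicit.
Import GRing.Theory.

Section H.
Variable n : nat.
Implicit Types (A : 'M['F_2]_n) (W : {set 'I_n}) (x y z w : 'rV['F_2]_n).

Lemma dE (i j : 'I_n) : (delta_mx 0 i : 'rV['F_2]_n) 0 j = (j == i)%:R.
Proof. by rewrite mxE eqxx. Qed.

Lemma dE0 (i j : 'I_n) : j != i -> (delta_mx 0 i : 'rV['F_2]_n) 0 j = 0.
Proof. by rewrite dE => /negbTE ->. Qed.

Lemma dsE0 (a : 'F_2) (i j : 'I_n) : j != i -> (a *: (delta_mx 0 i : 'rV['F_2]_n)) 0 j = 0.
Proof. by move=> ji; rewrite -[a *: _]/(a *: (delta_mx 0 i : 'rV['F_2]_n)) [LHS]mxE dE0 ?mulr0. Qed.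

Lemma supp_span W w :
  (w <= spanmx W)%MS <-> (forall j, j \notin W -> w 0 j = 0).
Proof.
split.
  move/sub_sumsmxP => [u_ ->] j jW; rewrite summxE; apply: big1 => i iW.
  have HH := submxMl (u_ i) <<delta_mx 0 i : 'rV['F_2]_n>>%MS.
  rewrite genmxE in HH.
  move: HH.
  case/sub_rVP => a ->; rewrite mxE dE0 ?mulr0 //.
  by apply: contraNneq jW => ->.
move=> H.
have -> : w = \sum_(i in W) w 0 i *: (delta_mx 0 i : 'rV['F_2]_n).
  apply/rowP => j; rewrite summxE.
  case jW: (j \in W).
    rewrite (bigD1 j) //= big1 ?addr0; first by rewrite mxE dE eqxx mulr1.
    move=> i /andP [_ ij]; rewrite mxE dE0 ?mulr0 // eq_sym //.
  rewrite H ?jW // big1 // => i iW; rewrite mxE dE0 ?mulr0 //.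
  by apply: contraFneq jW => ->.
apply: summx_sub => i iW; apply: scalemx_sub.
by apply: (sumsmx_sup i) => //; rewrite genmxE.
Qed.

Lemma e_span W v : v \in W -> ((delta_mx 0 v : 'rV['F_2]_n) <= spanmx W)%MS.
Proof.
move=> vW; apply/supp_span => j jW; rewrite dE0 //.
by apply: contraNneq jW => ->.
Qed.

Lemma bformE A x w : bform A x w = \sum_j (x *m A) 0 j * w 0 j.
Proof. by rewrite /bform !mxE; apply: eq_bigr => j _; rewrite [w^T j 0]mxE. Qed.

Lemma bform_e A x v : bform A x (delta_mx 0 v) = (x *m A) 0 v.
Proof.
rewrite bformE (bigD1 v) //= big1 ?addr0; first by rewrite dE eqxx mulr1.
by move=> j jv; rewrite dE0 ?mulr0.
Qed.

Lemma in_orth_e A W z v : in_orth A W z -> v \in W -> (z *m A) 0 v = 0.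
Proof. by move=> H vW; rewrite -bform_e; apply: H; apply: e_span. Qed.

Lemma in_orthP A W z : (forall v, v \in W -> (z *m A) 0 v = 0) -> in_orth A W z.
Proof.
move=> H w /supp_span Hw; rewrite bformE big1 // => j _.
case jW: (j \in W); first by rewrite H // mul0r.
by rewrite Hw ?jW // mulr0.
Qed.

Lemma red_suff A W :
  (forall x, exists y, (forall j, j \notin W -> y 0 j = 0) /\
     forall v, v \in W -> (y *m A) 0 v = (x *m A) 0 v) -> reducible A W.
Proof.
move=> H x; have [y [Hy Hv]] := H x; exists y, (x - y); split.
  by apply/supp_span.
split; last by rewrite addrC subrK.
apply: in_orthP => v vW; move: (Hv v vW); rewrite mulmxBl.
by move: (x *m A) (y *m A) => a b e; rewrite !mxE e subrr.
Qed.

Lemma notred A W v u : v \in W -> A u v = 1 ->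
  (forall i, i \in W -> A i v = 0) -> ~ reducible A W.
Proof.
move=> vW Auv HW H; have [y [z [Hy [Hz Hx]]]] := H (delta_mx 0 u).
have E : ((delta_mx 0 u : 'rV['F_2]_n) *m A) 0 v = (y *m A) 0 v + (z *m A) 0 v.
  by rewrite Hx mulmxDl mxE.
rewrite -rowE [row _ _ _ _]mxE Auv (in_orth_e Hz vW) addr0 in E.
have Y : (y *m A) 0 v = 0.
  rewrite mxE big1 // => i _; case iW: (i \in W); first by rewrite HW // mulr0.
  by move/supp_span: Hy => ->; rewrite ?iW // mul0r.
by move: E; rewrite Y => /eqP; rewrite oner_eq0.
Qed.

End H.

Lemma F2 (a : 'F_2) : a != 1 -> a = 0.
Proof. case: a => [[|[|k]]] //= Hk H; exact/val_inj. Qed.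

Section M.
Variables (n : nat) (A : 'M['F_2]_n) (hA : A^T = A).

Lemma symA i j : A i j = A j i.
Proof. by rewrite -{1}hA mxE. Qed.

Lemma scE (a : 'F_2) (i j : 'I_n) : ((a *: (delta_mx 0 i : 'rV['F_2]_n)) *m A) 0 j = a * A i j.
Proof. by rewrite -scalemxAl -rowE !mxE. Qed.

Lemma R1 v : A v v = 1 -> reducible A [set v].
Proof.
move=> Avv; apply: red_suff => x; exists ((x *m A) 0 v *: delta_mx 0 v); split.
  by move=> j; rewrite inE => jv; rewrite dsE0.
by move=> w; rewrite inE => /eqP ->; rewrite scE Avv mulr1.
Qed.

Lemma R2 v1 v2 : v1 != v2 -> A v1 v1 = 0 -> A v2 v2 = 0 -> A v1 v2 = 1 ->
  reducible A [set v1; v2].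
Proof.
move=> ne A11 A22 A12; have A21 : A v2 v1 = 1 by rewrite symA.
apply: red_suff => x.
exists ((x *m A) 0 v2 *: delta_mx 0 v1 + (x *m A) 0 v1 *: delta_mx 0 v2); split.
  move=> j; rewrite !inE negb_or => /andP [j1 j2].
  by rewrite [LHS]mxE !dsE0 ?addr0.
move=> w; rewrite !inE => /orP [] /eqP ->; rewrite mulmxDl [LHS]mxE !scE.
  by rewrite A11 A21 mulr0 mulr1 add0r.
by rewrite A12 A22 mulr0 mulr1 addr0.
Qed.

Lemma R3 v : A v v = 0 -> (forall u, u != v -> A v u = 0) -> reducible A [set v].
Proof.
move=> Avv Hu; apply: red_suff => x; exists 0; split.
  by move=> j _; rewrite mxE.
move=> w; rewrite inE => /eqP ->; rewrite mul0mx [LHS]mxE mxE big1 // => i _.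
case: (eqVneq i v) => [->|iv]; first by rewrite Avv mulr0.
by rewrite symA Hu ?mulr0.
Qed.

Lemma minU (W U : {set 'I_n}) : minimally_reducible A W -> U \subset W -> U != set0 ->
  reducible A U -> U = W.
Proof.
move=> [_ [_ HM]] UW U0 RU; apply/eqP; apply: contraT => ne.
by case: (HM U U0); rewrite // properEneq ne.
Qed.

Lemma set1_n0 (v : 'I_n) : [set v] != set0.
Proof. by apply/set0Pn; exists v; rewrite inE. Qed.

Lemma single_min v : reducible A [set v] -> minimally_reducible A [set v].
Proof.
move=> R; split; first exact: set1_n0.
split=> // U U0; rewrite properEneq subset1 => /andP [ne /orP [] e].
  by rewrite e in ne.
by rewrite e in U0.
Qed.

End M.

Theorem mainTheorem9 (n : nat) (A : 'M['F_2]_n) (hA : A^T = A)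
    (W : {set 'I_n}) (hW : W != set0) :
  minimally_reducible A W <->
  [\/ (exists v, W = [set v] /\ A v v = 1),
      (exists v1 v2, [/\ v1 != v2, W = [set v1; v2], A v1 v1 = 0,
                         A v2 v2 = 0 & A v1 v2 = 1])
    | (exists v, [/\ W = [set v], A v v = 0 &
                    forall u, u != v -> A v u = 0])].
Proof.
have sym := symA hA.
split.
  move=> MW; have HR := MW.2.1.
  case: (pickP [pred v | (v \in W) && (A v v == 1)]) => [v /andP [vW /eqP Avv] | H1].
    apply: Or31; exists v; split => //; symmetry.
    by apply: (minU MW); rewrite ?sub1set ?set1_n0 //; apply: R1.
  have L v : v \in W -> A v v = 0.
    by move=> vW; apply: F2; move: (H1 v) => /=; rewrite vW /= => ->.
  case: (pickP [pred p : 'I_n * 'I_n | [&& p.1 \in W, p.2 \in W & A p.1 p.2 == 1]])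
    => [[v1 v2] /and3P [/= v1W v2W /eqP A12] | H2].
    have ne : v1 != v2.
      by apply/eqP => e; move: A12; rewrite e L // => /eqP; rewrite eq_sym oner_eq0.
    apply: Or32; exists v1, v2; split; rewrite ?L //; symmetry.
    apply: (minU MW); first by rewrite subUset !sub1set v1W v2W.
      by apply/set0Pn; exists v1; rewrite !inE eqxx.
    by apply: R2; rewrite ?L.
  have L2 i j : i \in W -> j \in W -> A i j = 0.
    by move=> iW jW; apply: F2; move: (H2 (i, j)) => /=; rewrite iW jW /= => ->.
  case: (pickP [pred p : 'I_n * 'I_n | (p.1 \in W) && (A p.1 p.2 == 1)])
    => [[v u] /andP [/= vW /eqP Avu] | H3].
    exfalso; apply: (notred (u:=u) vW _ _ HR); first by rewrite sym Avu.
    by move=> i iW; apply: L2.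
  have L3 v u : v \in W -> A v u = 0.
    by move=> vW; apply: F2; move: (H3 (v, u)) => /=; rewrite vW /= => ->.
  case/set0Pn: hW => v vW.
  apply: Or33; exists v; split; [symmetry | exact: L3 | move=> u _; exact: L3].
  apply: (minU MW); rewrite ?sub1set ?set1_n0 //.
  by apply: (R3 hA); [exact: L3 | move=> u _; exact: L3].
case.
- by move=> [v [-> Avv]]; apply: single_min; apply: R1.
- move=> [v1 [v2 [ne -> A11 A22 A12]]]; split; first by apply/set0Pn; exists v1; rewrite !inE eqxx.
  split; first exact: R2.
  move=> U U0 /properP [sUW [m mW mU]].
  case/set0Pn: U0 => w wU.
  have wW : w \in [set v1; v2] := subsetP sUW w wU.
  have key a b : a \in [set v1; v2] -> b \in [set v1; v2] -> a != b ->
      A a b = 1 /\ A a a = 0.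
    rewrite !inE => /orP [] /eqP -> /orP [] /eqP ->; rewrite ?eqxx // => _;
      first [by split | by rewrite sym; split].
  have three a b c : a \in [set v1; v2] -> b \in [set v1; v2] ->
      c \in [set v1; v2] -> a != b -> a != c -> b = c.
    rewrite !inE => /orP [] /eqP -> /orP [] /eqP -> /orP [] /eqP ->;
      rewrite ?eqxx //.
  have mw : m != w by apply: contraNneq mU => ->.
  apply: (notred (u:=m) wU); first exact: (key m w mW wW mw).1.
  move=> i iU; have iW : i \in [set v1; v2] := subsetP sUW i iU.
  have im : m != i by apply: contraNneq mU => ->.
  rewrite (three m i w) //; rewrite eq_sym in mw; by case: (key w m wW mW mw).
- by move=> [v [-> Avv Hu]]; apply: single_min; apply: R3.
Qed.
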